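(* With the notation of the context, let $\beta^*=\inf_{x\in\Delta}F(x)$. Then there exists $x^*\in\Delta$ with $F(x^* )=\beta^*$.
   Context: Fix an integer $n\ge2$ and free generators $\xi_1,\dots,\xi_n$ of a free group; throughout $i,j,k\in\{1,\dots,n\}$ and $t,s,p\in\{-1,+1\}$. Let $\Psi$ be the set of reduced words $\xi_i^{2t}$; $\xi_i^t\xi_j^{2s}$ ($i\ne j$); $\xi_i^t\xi_j^s\xi_k^p$ ($i\ne j$, $j\ne k$). For a letter $\xi_a^x$ let $S(\xi_a^x)\subset\Psi$ be the set of words in $\Psi$ beginning with $\xi_a^x$, namely $\{\xi_a^{2x}\}\cup\{\xi_a^x\xi_j^{2s}\}\cup\{\xi_a^x\xi_j^s\xi_k^p\}$; for $a\ne b$ let $S(\xi_a^x\xi_b^y)=\{\xi_a^x\xi_b^{2y}\}\cup\{\xi_a^x\xi_b^y\xi_k^p: k\ne b\}$. A relation $r$ is a pair $(\psi_r,\Psi_r)$ with $\psi_r\in\Psi$, $\Psi_r\subseteq\Psi$. Let $\mathcal{F}$ be the collection of the following relations (indices $i_0\ne j_0$, in type 5a $i_0,j_0,k_0$ pairwise distinct, all signs arbitrary): 1a: $\psi_r=\xi_{i_0}^{2t_0}$, $\Psi_r=\Psi\setminus S(\xi_{i_0}^{t_0})$; 2b: $\psi_r=\xi_{i_0}^{t_0}\xi_{j_0}^{2s_0}$, $\Psi_r=\Psi\setminus S(\xi_{i_0}^{t_0}\xi_{j_0}^{s_0})$; 3a: $\psi_r=\xi_{i_0}^{t_0}\xi_{j_0}^{s_0}\xi_{i_0}^{t_0}$,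 $\Psi_r=\Psi\setminus S(\xi_{j_0}^{s_0}\xi_{i_0}^{t_0})$; 4b: $\psi_r=\xi_{i_0}^{t_0}\xi_{j_0}^{s_0}\xi_{i_0}^{-t_0}$, $\Psi_r=S(\xi_{i_0}^{t_0})$; 5a: $\psi_r=\xi_{i_0}^{t_0}\xi_{j_0}^{s_0}\xi_{k_0}^{p_0}$, $\Psi_r=\Psi\setminus S(\xi_{j_0}^{s_0}\xi_{k_0}^{p_0})$. Let $\Delta=\{x\in\mathbb{R}^\Psi: x(\psi)>0\ \forall\psi,\ \sum_{\psi}x(\psi)=1\}$. For a relation $r$ and $x\in\Delta$ put $x_r=x(\psi_r)$, $X_r=\sum_{\psi\in\Psi_r}x(\psi)$, $f_r(x)=\frac{1-x_r}{x_r}\cdot\frac{1-X_r}{X_r}$, and $F(x)=\max_{r\in\mathcal{F}}f_r(x)$. *)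

(* Defs.v *)
From HB Require Import structures.
From mathcomp Require Import all_boot all_order all_algebra.
From mathcomp Require Import boolp classical_sets reals.
Set Implicit Arguments. Unset Strict Implicit. Unset Printing Implicit Defensive.
Import Order.TTheory GRing.Theory Num.Theory.
Local Open Scope ring_scope.
Local Open Scope classical_set_scope.

(* A letter xi_i^t : generator index i : 'I_n, sign t : bool (true = +1, false = -1). *)
Definition letter (n : nat) : finType := ('I_n * bool)%type.
Definition inv_letter n (a : letter n) : letter n := (a.1, ~~ a.2).

(* A word of length 2 or 3 : first letter, second letter, optional third letter. *)
Definition word (n : nat) : finType := (letter n * letter n * option (letter n))%type.

(* Membership in Psi:
   (a, a, None)         = xi_i^{2t}                      (a = xi_i^t)
   (a, b, Some b)       = xi_i^t xi_j^{2s},  i <> j       (a = xi_i^t, b = xi_j^s)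
   (a, b, Some c)       = xi_i^t xi_j^s xi_k^p, i <> j, j <> k. *)
Definition in_Psi n (w : word n) : bool :=
  match w with
  | (a, b, None) => a == b
  | (a, b, Some c) => (a.1 != b.1) && ((c == b) || (c.1 != b.1))
  end.

Definition Psi (n : nat) : finType := {w : word n | in_Psi w}.

Definition S1 n (a : letter n) : {set Psi n} := [set w : Psi n | (val w).1.1 == a].
Definition S2 n (a b : letter n) : {set Psi n} := [set w : Psi n | (val w).1 == (a, b)].

(* A relation r = (psi_r, Psi_r). *)
Definition relation (n : nat) : finType := (Psi n * {set Psi n})%type.

Definition in_F n (r : relation n) : bool :=
  [||
      [exists i0 : 'I_n, exists t0 : bool,
        (val r.1 == ((i0, t0), (i0, t0), None)) && (r.2 == ~: S1 (i0, t0))],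
      [exists i0 : 'I_n, exists j0 : 'I_n, exists t0 : bool, exists s0 : bool,
        [&& i0 != j0, val r.1 == ((i0, t0), (j0, s0), Some (j0, s0))
          & r.2 == ~: S2 (i0, t0) (j0, s0)]],
      [exists i0 : 'I_n, exists j0 : 'I_n, exists t0 : bool, exists s0 : bool,
        [&& i0 != j0, val r.1 == ((i0, t0), (j0, s0), Some (i0, t0))
          & r.2 == ~: S2 (j0, s0) (i0, t0)]],
      [exists i0 : 'I_n, exists j0 : 'I_n, exists t0 : bool, exists s0 : bool,
        [&& i0 != j0, val r.1 == ((i0, t0), (j0, s0), Some (i0, ~~ t0))
          & r.2 == S1 (i0, t0)]]
    |
      [exists i0 : 'I_n, exists j0 : 'I_n, exists k0 : 'I_n,
       exists t0 : bool, exists s0 : bool, exists p0 : bool,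
        [&& i0 != j0, j0 != k0, i0 != k0,
            val r.1 == ((i0, t0), (j0, s0), Some (k0, p0))
          & r.2 == ~: S2 (j0, s0) (k0, p0)]]].

Definition Delta (R : realType) (n : nat) : set (Psi n -> R) :=
  [set x | (forall p, 0 < x p) /\ \sum_(p : Psi n) x p = 1].

Definition x_r (R : realType) n (r : relation n) (x : Psi n -> R) : R := x r.1.
Definition X_r (R : realType) n (r : relation n) (x : Psi n -> R) : R :=
  \sum_(p in r.2) x p.

Definition f_r (R : realType) n (r : relation n) (x : Psi n -> R) : R :=
  (1 - x_r r x) / x_r r x * ((1 - X_r r x) / X_r r x).

(* F(x) = max_{r in F} f_r(x).  Taken as a big max with neutral element 0;
   on Delta every f_r(x) is > 0 and F is nonempty, so this is the genuine max. *)
Definition FF (R : realType) n (x : Psi n -> R) : R :=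
  \big[Num.max/0]_(r : relation n | in_F r) f_r r x.

(* Main.v *)
Require Import Defs.
From HB Require Import structures.
From mathcomp Require Import all_boot all_order all_algebra.
From mathcomp Require Import boolp classical_sets reals.
Import Order.TTheory GRing.Theory Num.Theory.
Local Open Scope ring_scope.
Local Open Scope classical_set_scope.

From mathcomp Require Import ring lra.
Set Implicit Arguments. Unset Strict Implicit. Unset Printing Implicit Defensive.
Local Close Scope classical_set_scope.
Section Bounds.
Variables (R : realType) (n : nat) (hn : (1 < n)%N).
Variables (x : Psi n -> R) (hpos : forall p, 0 < x p)
  (hsum : \sum_(p : Psi n) x p = 1).

Lemma sum_sub (A B : {set Psi n}) : A \subset B ->
  \sum_(p in A) x p <= \sum_(p in B) x p.
Proof.
move=> /fintype.subsetP AB; rewrite [X in X <= _]big_mkcond [X in _ <= X]big_mkcond.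
apply: ler_sum => p _; case: ifP => pA; first by rewrite (AB _ pA).
case: ifP => // _; exact: ltW.
Qed.

Lemma sum_compl (A : {set Psi n}) : \sum_(p in ~: A) x p = 1 - \sum_(p in A) x p.
Proof.
rewrite -hsum [X in _ = X - _](bigID (mem A)) /= [X in _ = X - _]addrC addrK.
by apply: eq_bigl => p; rewrite finset.in_setC.
Qed.

Lemma sum_ge1 (A : {set Psi n}) p : p \in A -> x p <= \sum_(q in A) x q.
Proof.
move=> pA; rewrite (bigD1 p) //= lerDl; apply: sumr_ge0 => q _; exact: ltW.
Qed.

Lemma sum_le1 (A : {set Psi n}) : \sum_(p in A) x p <= 1.
Proof. rewrite -hsum big_mkcond; apply: ler_sum => p _; case: ifP => _ //; exact: ltW. Qed.

End Bounds.

Section Ineq.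
Variable R : realType.
Definition gg (u : R) := (1 - u) / u.

Lemma ggE u : 0 < u -> gg u * u = 1 - u.
Proof. by move=> u0; rewrite /gg mulrVK // unitfE gt_eqF. Qed.

Lemma gg_ge0 u : 0 < u -> u <= 1 -> 0 <= gg u.
Proof. by move=> u0 u1; rewrite /gg divr_ge0 // ?subr_ge0 // ltW. Qed.

Lemma gg_anti a m : 0 < a -> a <= m -> gg m <= gg a.
Proof.
move=> a0 am; have m0 : 0 < m by apply: lt_le_trans am.
rewrite /gg ler_pdivrMr // mulrAC ler_pdivlMr //; nra.
Qed.

Lemma ineqA (B a m : R) : 0 <= B -> 0 < a -> a <= m -> m <= 1 ->
  gg a * gg m <= B -> 1 / (B + 2) <= m.
Proof.
move=> B0 a0 am m1 h; have m0 : 0 < m by apply: lt_le_trans am.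
have g0 := gg_ge0 m0 m1; have ga := gg_anti a0 am.
have e := ggE m0.
have h2 : gg m * gg m <= B.
  apply: le_trans h; apply: ler_wpM2r => //.
have h3 : gg m <= B + 1 by nra.
rewrite ler_pdivrMr; last by lra.
nra.
Qed.

Lemma ineqK (B a A c : R) : 0 <= B -> 0 < a -> a <= 1 -> 0 < A ->
  A <= 1 - c -> 0 < c -> gg a * gg A <= B -> c / (c + B) <= a.
Proof.
move=> B0 a0 a1 A0 Ac c0 h.
have ea := ggE a0; have eA := ggE A0.
have gA0 := gg_ge0 a0 a1.
have gA1 : c <= gg A by nra.
have h2 : gg a * c <= B by nra.
rewrite ler_pdivrMr; last by lra.
nra.
Qed.
End Ineq.

Section Comb.
Variables (R : realType) (n : nat) (hn : (1 < n)%N).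
Variables (x : Psi n -> R) (hpos : forall p, 0 < x p)
  (hsum : \sum_(p : Psi n) x p = 1).
Variables (B : R) (B0 : 0 <= B) (hB : FF x <= B).

Lemma frB r : in_F r -> f_r r x <= B.
Proof. move=> hr; apply: le_trans hB; exact: le_bigmax_cond. Qed.

Definition oth (i : 'I_n) : 'I_n :=
  if val i == 0%N then Ordinal hn else Ordinal (ltn_trans (ltnSn 0) hn).

Lemma oth_neq i : i != oth i.
Proof. rewrite /oth; case: ifP => /eqP h; apply/eqP => e; rewrite e /= in h; by []. Qed.

Lemma test (i j : 'I_n) (t s : bool) (h : i != j) : in_Psi ((i,t),(j,s),Some (i, ~~t)).
Proof. by rewrite /= h /= orbT. Qed.

Definition mkD (i j : 'I_n) (t s : bool) (h : i != j) : Psi n :=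
  exist _ ((i,t),(j,s),Some (i, ~~t)) (test t s h).

Lemma D_in_F i j t s (h : i != j) : in_F (mkD t s h, S1 (i,t)).
Proof.
apply/orP; right; apply/orP; right; apply/orP; right; apply/orP; left.
apply/existsP; exists i; apply/existsP; exists j; apply/existsP; exists t;
apply/existsP; exists s.
by rewrite h !eqxx.
Qed.


Definition m1 (u : letter n) := \sum_(p in S1 u) x p.
Definition c1 := 1 / (B + 2).

Lemma x_le1 p : x p <= 1.
Proof. rewrite -hsum (bigD1 p) //= lerDl; apply: sumr_ge0 => q _; exact: ltW. Qed.

Lemma D_inS1 i j t s (h : i != j) : mkD t s h \in S1 (i, t).
Proof. by rewrite inE. Qed.

Lemma D_inS2 i j t s (h : i != j) : mkD t s h \in S2 (i, t) (j, s).
Proof. by rewrite inE. Qed.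

Lemma m1_lb u : c1 <= m1 u.
Proof.
case: u => i t.
have h := oth_neq i.
have := frB (D_in_F t true h).
rewrite /f_r /x_r /X_r /= => hf.
apply: (@ineqA _ B (x (mkD t true h))) => //.
- exact: sum_ge1 (D_inS1 _ _ _).
- exact: sum_le1.
Qed.

Lemma c1_pos : 0 < c1.
Proof. rewrite /c1 divr_gt0 //; have := B0; lra. Qed.

Lemma c1_le : c1 <= 1/2.
Proof. have := B0; rewrite /c1 ler_pdivrMr; last by have := B0; lra. rewrite mul1r ler_pdivlMl; have := B0; lra. Qed.

Lemma m1_ub u : m1 u <= 1 - c1.
Proof.
case: u => i t.
have hs : S1 (i, ~~ t) \subset ~: S1 (i, t).
  apply/fintype.subsetP => p; rewrite !inE => /eqP ->.
  by apply/eqP => -[]; case: t.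
have := sum_sub hpos hs; rewrite sum_compl //.
have := m1_lb (i, ~~ t); rewrite /m1; lra.
Qed.

Definition cD := c1 / (c1 + B).

Lemma D_lb i j t s (h : i != j) : cD <= x (mkD t s h).
Proof.
have := frB (D_in_F t s h); rewrite /f_r /x_r /X_r /= => hf.
apply: (@ineqK _ B _ (m1 (i, t))) => //.
- exact: x_le1.
- exact: lt_le_trans c1_pos (m1_lb _).
- exact: m1_ub.
- exact: c1_pos.
Qed.

Lemma S2c_bounds i j t s (h : i != j) :
  c1 <= \sum_(p in ~: S2 (i, t) (j, s)) x p <= 1 - cD.
Proof.
rewrite sum_compl //; apply/andP; split.
- have hs : S1 (i, ~~ t) \subset ~: S2 (i, t) (j, s).
    apply/fintype.subsetP => -[[[a b] c] hp]; rewrite !inE /= => /eqP ->.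
    by apply/negP => /eqP [] ; case: t.
  have := sum_sub hpos hs; rewrite sum_compl //.
  have := m1_lb (i, ~~ t); rewrite /m1; lra.
- have := sum_ge1 hpos (D_inS2 t s h); have := D_lb t s h; lra.
Qed.


Definition c0 := c1 * cD.

Lemma cD_pos : 0 < cD.
Proof. have := c1_pos; have := B0; rewrite /cD => h1 h2; rewrite divr_gt0 //; lra. Qed.

Lemma cD_le1 : cD <= 1.
Proof.
have := c1_pos; have := B0; rewrite /cD => h1 h2.
rewrite ler_pdivrMr; lra.
Qed.

Lemma c0_pos : 0 < c0.
Proof. by rewrite /c0 mulr_gt0 // ?c1_pos ?cD_pos. Qed.

Lemma c0_le_c1 : c0 <= c1.
Proof. rewrite /c0 ler_piMr ?cD_le1 //; exact: ltW c1_pos. Qed.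

Lemma c0_le_cD : c0 <= cD.
Proof.
rewrite /c0 ler_piMl ?(ltW cD_pos) //; have := c1_le; lra.
Qed.

Definition delta := c0 / (c0 + B).

Lemma rel_lb r : in_F r -> c1 <= X_r r x -> X_r r x <= 1 - c0 ->
  delta <= x r.1.
Proof.
move=> hr h1 h2; have := frB hr; rewrite /f_r => hf.
apply: (@ineqK _ B _ (X_r r x)) => //.
- exact: x_le1.
- exact: lt_le_trans c1_pos h1.
- exact: c0_pos.
Qed.


Definition mkP (w : word n) (h : in_Psi w) : Psi n := exist _ w h.

Lemma all_lb p : delta <= x p.
Proof.
have hc01 := c0_le_c1; have hc0D := c0_le_cD.
case: p => [[[[i t] [j s]] [[k q]|]] hw].
- have /= /andP [hij hc] := hw.
  have [e|ne] := eqVneq (k, q) (j, s).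
  + case: e => ? ?; subst k q.
    apply: (rel_lb (r := (mkP hw, ~: S2 (i,t) (j,s)))).
    * apply/orP; right; apply/orP; left.
      apply/existsP; exists i; apply/existsP; exists j; apply/existsP; exists t;
      apply/existsP; exists s.
      by rewrite hij !eqxx.
    * by case/andP: (S2c_bounds t s hij).
    * case/andP: (S2c_bounds t s hij) => _ h; rewrite /X_r /=; lra.
  + rewrite (negbTE ne) /= in hc.
    have [eki|nki] := eqVneq k i.
    * subst k; have [eqt|nqt] := eqVneq q t.
      - subst q. have hji : j != i by rewrite eq_sym.
        apply: (rel_lb (r := (mkP hw, ~: S2 (j,s) (i,t)))).
        + apply/orP; right; apply/orP; right; apply/orP; left.
          apply/existsP; exists i; apply/existsP; exists j; apply/existsP; exists t;
          apply/existsP; exists s.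
          by rewrite hij !eqxx.
        + by case/andP: (S2c_bounds s t hji).
        + case/andP: (S2c_bounds s t hji) => _ h; rewrite /X_r /=; lra.
      - have eq : q = ~~ t by move: nqt; clear; case: q; case: t.
        subst q.
        apply: (rel_lb (r := (mkP hw, S1 (i,t)))).
        + apply/orP; right; apply/orP; right; apply/orP; right; apply/orP; left.
          apply/existsP; exists i; apply/existsP; exists j; apply/existsP; exists t;
          apply/existsP; exists s.
          by rewrite hij !eqxx.
        + exact: m1_lb.
        + have := m1_ub (i, t); rewrite /X_r /m1 /=; lra.
    * have hjk : j != k by rewrite eq_sym.
      have hik : i != k by rewrite eq_sym.
      apply: (rel_lb (r := (mkP hw, ~: S2 (j,s) (k,q)))).
      + apply/orP; right; apply/orP; right; apply/orP; right; apply/orP; right.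
        apply/existsP; exists i; apply/existsP; exists j; apply/existsP; exists k;
        apply/existsP; exists t; apply/existsP; exists s; apply/existsP; exists q.
        by rewrite hij hjk hik !eqxx.
      + by case/andP: (S2c_bounds s q hjk).
      + case/andP: (S2c_bounds s q hjk) => _ h; rewrite /X_r /=; lra.
- have /= /eqP [? ?] := hw; subst j s.
  apply: (rel_lb (r := (mkP hw, ~: S1 (i,t)))).
  + apply/orP; left.
    apply/existsP; exists i; apply/existsP; exists t.
    by rewrite !eqxx.
  + rewrite /X_r /= sum_compl //; have := m1_ub (i, t); rewrite /m1; lra.
  + rewrite /X_r /= sum_compl //; have := m1_lb (i, t); rewrite /m1; lra.
Qed.

End Comb.


From mathcomp Require Import all_classical all_reals all_analysis.
Import numFieldNormedType.Exports.
Import ArrowAsProduct.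
Local Open Scope classical_set_scope.
Section Cont.
Variables (R : realType) (n : nat).
Let T := (Psi n -> R).
Variable t : T.

Definition ct (h : T -> R) := {for t, continuous h}.

Lemma ctD h1 h2 : ct h1 -> ct h2 -> ct (fun g => h1 g + h2 g).
Proof. move=> a b; have := cvgD a b; exact. Qed.

Lemma ctM h1 h2 : ct h1 -> ct h2 -> ct (fun g => h1 g * h2 g).
Proof. move=> a b; have := cvgM a b; exact. Qed.

Lemma ctB h1 h2 : ct h1 -> ct h2 -> ct (fun g => h1 g - h2 g).
Proof. move=> a b; have := cvgB a b; exact. Qed.

Lemma ctV h : h t != 0 -> ct h -> ct (fun g => (h g)^-1).
Proof. move=> a b; have := cvgV a b; exact. Qed.

Lemma ct_cst c : ct (fun _ => c).
Proof. have := @cvg_cst R c T (nbhs t); exact. Qed.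

Lemma ct_max h1 h2 : ct h1 -> ct h2 -> ct (fun g => Num.max (h1 g) (h2 g)).
Proof. move=> a b; have := continuous_max a b; exact. Qed.

Lemma ct_proj p : ct (fun g => g p).
Proof. have := (@proj_continuous _ (fun _ : Psi n => R) p t); exact. Qed.

Lemma ct_sum (s : seq (Psi n)) (P : pred (Psi n)) :
  ct (fun g => \sum_(p <- s | P p) g p).
Proof.
elim: s => [|a s IH].
  have -> : (fun g : T => \sum_(p <- [::] | P p) g p) = fun _ => 0.
    by apply: funext => g; rewrite big_nil.
  exact: ct_cst.
have -> : (fun g : T => \sum_(p <- a :: s | P p) g p) =
    fun g => (if P a then g a else 0) + \sum_(p <- s | P p) g p.
  by apply: funext => g; rewrite big_cons; case: ifP => _; rewrite ?add0r.
apply: ctD => //; case: (P a); [exact: ct_proj | exact: ct_cst].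
Qed.

Lemma ct_bigmax (s : seq (relation n)) (P : pred (relation n))
  (F : relation n -> T -> R) : (forall r, P r -> ct (F r)) ->
  ct (fun g => \big[Num.max/0]_(r <- s | P r) F r g).
Proof.
move=> hF; elim: s => [|a s IH].
  have -> : (fun g : T => \big[Num.max/0]_(r <- [::] | P r) F r g) = fun _ => 0.
    by apply: funext => g; rewrite big_nil.
  exact: ct_cst.
case Pa : (P a).
  have -> : (fun g : T => \big[Num.max/0]_(r <- a :: s | P r) F r g) =
      fun g => Num.max (F a g) (\big[Num.max/0]_(r <- s | P r) F r g).
    by apply: funext => g; rewrite big_cons Pa.
  by apply: ct_max => //; apply: hF.
have -> : (fun g : T => \big[Num.max/0]_(r <- a :: s | P r) F r g) =
    fun g => (\big[Num.max/0]_(r <- s | P r) F r g).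
  by apply: funext => g; rewrite big_cons Pa.
exact: IH.
Qed.

Lemma ct_fr r : (forall p, 0 < t p) -> ct (f_r r).
Proof.
move=> tpos.
have [e|[p hp]] := finset.set_0Vmem r.2.
  have E : (fun g : T => f_r r g) = fun _ => 0.
    apply: funext => g; rewrite /f_r /X_r e finset.big_set0 invr0 !mulr0 //.
  have := @ct_cst 0; rewrite -E; exact.
have h1 := @ct_proj r.1.
have h2 : ct (fun g => X_r r g) by exact: ct_sum.
have n1 : t r.1 != 0 by rewrite gt_eqF.
have n2 : X_r r t != 0.
  rewrite gt_eqF // /X_r (bigD1 p) //=.
  have := tpos p; have : 0 <= \sum_(i in r.2 | i != p) t i.
    by apply: sumr_ge0 => i _; exact: ltW.
  move=> a b; lra.
have := ctM (ctM (ctB (@ct_cst 1) h1) (ctV n1 h1))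
            (ctM (ctB (@ct_cst 1) h2) (ctV n2 h2)).
exact.
Qed.

Lemma ct_FF : (forall p, 0 < t p) -> ct (@FF R n).
Proof.
move=> tpos; rewrite /ct /FF.
have := @ct_bigmax (index_enum _) (fun r => in_F r) (fun r g => f_r r g)
  (fun r _ => @ct_fr r tpos).
exact.
Qed.

End Cont.

Theorem lemma5p2 (R : realType) (n : nat) (hn : (2 <= n)%N) :
  exists x : Psi n -> R,
    @Delta R n x /\ FF x = inf [set FF y | y in @Delta R n].
Proof.
have h0 : (0 < n)%N by apply: leq_trans hn.
pose i0 : 'I_n := Ordinal h0.
have w0 : in_Psi ((i0,true),(i0,true),None) by rewrite /= eqxx.
have cpos : (0 < #|Psi n|)%N by apply/card_gt0P; exists (mkP w0).
pose N : R := (#|Psi n|)%:R.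
have N0 : 0 < N by rewrite ltr0n.
pose x0 : Psi n -> R := fun _ => N^-1.
have x0pos : forall p, 0 < x0 p by move=> p; rewrite invr_gt0.
have x0sum : \sum_(p : Psi n) x0 p = 1.
  rewrite /x0 sumr_const -mulr_natr mulVf //; first by rewrite gt_eqF.
pose B := FF x0.
have B0 : 0 <= B by exact: bigmax_ge_id.
pose d := delta B.
have dpos : 0 < d.
  have := c0_pos B0; rewrite /d /delta => h; rewrite divr_gt0 //.
  by move: B0 h; clear; lra.
pose K := [set g : Psi n -> R | forall p, `[d, 1] (g p)] `&`
          ((fun g : Psi n -> R => \sum_(p : Psi n) g p) @^-1` [set z | z = 1]).
have Kin : forall y, Delta y -> FF y <= B -> K y.
  move=> y [ypos ysum] hy; split.
    move=> p /=; rewrite in_itv /=; apply/andP; split.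
      exact: (all_lb hn ypos ysum B0 hy).
    exact: (x_le1 ypos ysum).
  exact: ysum.
have x0D : Delta x0 by split.
have Kne : K !=set0 by exists x0; apply: Kin.
have Kc : compact K.
  apply: compact_closedI.
    have := (@tychonoff (Psi n) (fun _ => R) (fun _ => `[d, 1]) (fun _ => segment_compact (a:=d) (b:=1))).
    exact.
  apply: preimage_closed; last exact: closed_eq.
  move=> g _; exact: ct_sum.
have Kcont : {within K, continuous (@FF R n)}.
  apply: continuous_in_subspaceT => g /set_mem [hg _].
  apply: ct_FF => p; have := hg p; rewrite /= in_itv /= => /andP [h _].
  exact: lt_le_trans dpos h.
have [xs /set_mem [xsb xss] xsmin] := compact_EVT_min Kne Kc Kcont.
have xsD : Delta xs.
  split; last exact: xss.
  move=> p; have := xsb p; rewrite /= in_itv /= => /andP [h _].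
  exact: lt_le_trans dpos h.
have key : forall y : Psi n -> R, Delta y -> FF xs <= FF y.
  move=> y yD; case: (leP (FF y) B) => hy.
    by apply: xsmin; apply/mem_set; apply: Kin.
  apply: le_trans (ltW hy); apply: xsmin; apply/mem_set; exact: Kin.
exists xs; split => //.
apply/eqP; rewrite eq_le; apply/andP; split.
- apply: lb_le_inf; first by exists (FF xs); exists xs.
  by move=> z [y yD <-]; exact: key.
- apply: ge_inf; last by exists xs.
  by exists (FF xs) => z [y yD <-]; exact: key.
Qed.
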